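(* Let $\delta>0$ be a constant. Consider single-machine scheduling with all jobs available at time $0$, and suppose all predictions are underestimates, i.e. $\hat p_j \le p_j$ for every job $j$. Then PMLF with parameter $\delta$ is $(2+2\delta)$-competitive for minimizing the total completion time $\sum_j C_j$, and it preempts each job $j$ at most $O\big(\frac{1}{\delta}\log_2(p_j/\hat p_j)\big)$ times.
   Context: There are $n$ jobs, all available at time $0$, on a single machine that processes at most one job at a time at unit speed; preemption is allowed. Job $j$ has an unknown processing requirement $p_j \ge 1$ and completes (at time $C_j$) once it has received $p_j$ units of processing; $p_j$ is learned only at completion. For each job a prediction $\hat p_j>0$ is known in advance. A preemption of job $j$ is an interruption of its processing before it completes. An algorithm is $c$-competitive if on every instance its total completion time is at most $c$ times the minimum total completion time of an offline schedule that knows all $p_j$. PMLF (Predicted Multi-Level Feedback) with parameter $\delta>0$: maintain FIFO queues $Q_k$ indexed by integers $k$. Initially each job $j$ is placed into $Q_k$ with $k=\lfloor \log_{1+\delta}\hat p_j\rfloor$. At any time, the machine processes the front job of the non-empty queue of lowest index. Whenever a job $j\in Q_i$ has received total processing $(1+\delta)^{i+1}$ (without completing), it is removed from $Q_i$ and placed at the end of $Q_{i+1}$. *)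

(* Defs.v *)
From Stdlib Require Import Reals List ZArith Arith.
Open Scope R_scope.

Fixpoint sumR (n : nat) (f : nat -> R) : R :=
  match n with
  | O => 0
  | S m => sumR m f + f m
  end.

Definition updR (f : nat -> R) (j : nat) (v : R) : nat -> R :=
  fun k => if Nat.eqb k j then v else f k.

Definition updN (f : nat -> nat) (j : nat) (v : nat) : nat -> nat :=
  fun k => if Nat.eqb k j then v else f k.

(* integer floor: up x is the unique integer with x < up x <= x + 1 *)
Definition floorZ (x : R) : Z := (up x - 1)%Z.

Definition log2 (x : R) : R := ln x / ln 2.

(** An offline schedule is a finite sequence of consecutive pieces starting at
   time 0; a piece (Some i, d) processes job i for d time units, (None, d) is
   idle time. *)

Definition offline_schedule := list (option nat * R).

Fixpoint off_proc (S : offline_schedule) (j : nat) : R :=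
  match S with
  | nil => 0
  | (o, d) :: S' =>
      match o with
      | Some i => if Nat.eqb i j then d + off_proc S' j else off_proc S' j
      | None => off_proc S' j
      end
  end.

(* completion time of job j; t = current time, r = processing of j so far *)
Fixpoint off_comp_aux (p : nat -> R) (S : offline_schedule) (t r : R) (j : nat)
  : R :=
  match S with
  | nil => 0
  | (o, d) :: S' =>
      match o with
      | Some i =>
          if Nat.eqb i j then
            if Rle_dec (p j) (r + d) then t + (p j - r)
            else off_comp_aux p S' (t + d) (r + d) j
          else off_comp_aux p S' (t + d) r j
      | None => off_comp_aux p S' (t + d) r j
      end
  end.

Definition off_comp (p : nat -> R) (S : offline_schedule) (j : nat) : R :=
  off_comp_aux p S 0 0 j.

Definition valid_offline (n : nat) (p : nat -> R) (S : offline_schedule) : Prop :=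
  (forall o d, In (o, d) S -> 0 <= d) /\
  (forall j, (j < n)%nat -> p j <= off_proc S j).

(** The family of FIFO queues (Q_k)_{k in Z} is represented by a single list of
   (level, job) pairs sorted by level: the concatenation Q_{k1} ++ Q_{k2} ++ ...
   for k1 < k2 < ...  Its head is the front job of the non-empty queue of
   lowest index.  Appending a job at the end of Q_l = inserting it after every
   entry of level <= l. *)

Fixpoint ins (e : Z * nat) (q : list (Z * nat)) : list (Z * nat) :=
  match q with
  | nil => e :: nil
  | e' :: q' => if Z.leb (fst e') (fst e) then e' :: ins e q' else e :: q
  end.

Record pstate := mkPState {
  ps_time  : R;
  ps_queue : list (Z * nat);
  ps_recv  : nat -> R;
  ps_comp  : nat -> R;
  ps_npre  : nat -> nat
}.

Section PMLF.
Variables (delta : R) (p phat : nat -> R).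

Definition init_level (j : nat) : Z := floorZ (ln (phat j) / ln (1 + delta)).

Definition threshold (i : Z) : R := powerRZ (1 + delta) (i + 1).

Definition pmlf_init (n : nat) : pstate :=
  mkPState 0
    (fold_left (fun q j => ins (init_level j, j) q) (seq 0 n) nil)
    (fun _ => 0) (fun _ => 0) (fun _ => O).

(* One event of PMLF: the front job j of the lowest non-empty queue Q_l is
   processed (uninterrupted, since no job arrives later) until it either
   completes or has received (1+delta)^(l+1) units, whichever comes first.
   In the latter case it is moved to the end of Q_(l+1); this is a
   preemption of j iff the machine then continues with another job. *)
Definition pmlf_step (s : pstate) : pstate :=
  match ps_queue s with
  | nil => s
  | (l, j) :: q =>
      let r := ps_recv s j in
      let thr := threshold l in
      if Rle_dec (p j) thr then
        mkPState (ps_time s + (p j - r)) q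
                 (updR (ps_recv s) j (p j))
                 (updR (ps_comp s) j (ps_time s + (p j - r)))
                 (ps_npre s)
      else
        let q' := ins (l + 1, j)%Z q in
        let continues := match q' with
                         | (_, j') :: _ => Nat.eqb j' j
                         | nil => false
                         end in
        mkPState (ps_time s + (thr - r)) q'
                 (updR (ps_recv s) j thr)
                 (ps_comp s)
                 (if continues then ps_npre s
                  else updN (ps_npre s) j (S (ps_npre s j)))
  end.

Definition pmlf_run (n k : nat) : pstate := Nat.iter k pmlf_step (pmlf_init n).

End PMLF.

(* Main.v *)
Require Import Defs.
From Stdlib Require Import Reals List ZArith Arith Lra Lia Psatz Sorting Permutation.
Open Scope R_scope.

Lemma sumR_ext n f g : (forall k, (k < n)%nat -> f k = g k) -> sumR n f = sumR n g.
Proof. induction n; simpl; intros H; auto. rewrite IHn by (intros; apply H; lia). rewrite H by lia; auto. Qed.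

Lemma sumR_le n f g : (forall k, (k < n)%nat -> f k <= g k) -> sumR n f <= sumR n g.
Proof. induction n; simpl; intros H; [lra|]. assert (H1 := H n ltac:(lia)). assert (sumR n f <= sumR n g) by (apply IHn; intros; apply H; lia). lra. Qed.

Lemma sumR_plus n f g : sumR n (fun k => f k + g k) = sumR n f + sumR n g.
Proof. induction n; simpl; [lra|]. rewrite IHn; lra. Qed.

Lemma sumR_scal n c f : sumR n (fun k => c * f k) = c * sumR n f.
Proof. induction n; simpl; [lra|]. rewrite IHn; lra. Qed.

Lemma sumR_zero n : sumR n (fun _ => 0) = 0.
Proof. induction n; simpl; [lra|]. rewrite IHn; lra. Qed.

Lemma sumR_if n (b : bool) f : sumR n (fun k => if b then f k else 0) = if b then sumR n f else 0.
Proof. destruct b; [reflexivity| apply sumR_zero]. Qed.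

Lemma sumR_delta n i X : (i < n)%nat -> sumR n (fun k => if Nat.eqb k i then X else 0) = X.
Proof.
  induction n; simpl; intros H; [lia|].
  destruct (Nat.eq_dec i n).
  - subst. rewrite Nat.eqb_refl.
    rewrite (sumR_ext n _ (fun _ => 0)). rewrite sumR_zero; lra.
    intros k Hk. destruct (Nat.eqb_spec k n); [lia|auto].
  - rewrite IHn by lia. destruct (Nat.eqb_spec n i); [lia|lra].
Qed.

Lemma sumR_nonneg n f : (forall k, (k < n)%nat -> 0 <= f k) -> 0 <= sumR n f.
Proof. intros H. apply Rle_trans with (sumR n (fun _ => 0)); [rewrite sumR_zero; lra|]. apply sumR_le. auto. Qed.

Section Offline.
Variables (n : nat) (p : nat -> R).

Definition SA (a : nat -> bool) (f : nat -> R) : R :=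
  sumR n (fun k => if a k then f k else 0).

Definition rm (a : nat -> bool) (i : nat) : nat -> bool :=
  fun k => if Nat.eqb k i then false else a k.

Lemma SA_ext a f g : (forall k, (k < n)%nat -> a k = true -> f k = g k) -> SA a f = SA a g.
Proof. intros H; unfold SA; apply sumR_ext; intros k Hk. destruct (a k) eqn:E; auto. Qed.

Lemma SA_le a f g : (forall k, (k < n)%nat -> a k = true -> f k <= g k) -> SA a f <= SA a g.
Proof. intros H; unfold SA; apply sumR_le; intros k Hk. destruct (a k) eqn:E; auto; lra. Qed.

Lemma SA_plus a f g : SA a (fun k => f k + g k) = SA a f + SA a g.
Proof. unfold SA. rewrite <- sumR_plus. apply sumR_ext; intros. destruct (a k); lra. Qed.

Lemma SA_nonneg a f : (forall k, (k < n)%nat -> a k = true -> 0 <= f k) -> 0 <= SA a f.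
Proof. intros H; unfold SA; apply sumR_nonneg; intros k Hk. destruct (a k) eqn:E; auto; lra. Qed.

Lemma SA_none a f : (forall k, (k < n)%nat -> a k = false) -> SA a f = 0.
Proof. intros H; unfold SA. transitivity (sumR n (fun _ => 0)); [|apply sumR_zero]. apply sumR_ext; intros k Hk. rewrite (H k Hk). reflexivity. Qed.

Lemma SA_remove_gen m a f i : a i = true ->
  sumR m (fun k => if a k then f k else 0) =
  (if Nat.ltb i m then f i else 0) + sumR m (fun k => if rm a i k then f k else 0).
Proof.
  intros Hi. induction m; simpl; [lra|]. rewrite IHm. unfold rm.
  destruct (Nat.eqb_spec m i).
  - subst. rewrite Hi. rewrite Nat.ltb_irrefl. assert (Nat.ltb i (S i) = true) by (apply Nat.ltb_lt; lia).
    rewrite H. lra.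
  - destruct (Nat.ltb_spec i m); destruct (Nat.ltb_spec i (S m)); try lia; lra.
Qed.

Lemma SA_remove a f i : (i < n)%nat -> a i = true -> SA a f = f i + SA (rm a i) f.
Proof. intros H Hi. unfold SA. rewrite (SA_remove_gen n a f i Hi).
  assert (Nat.ltb i n = true) as E by (apply Nat.ltb_lt; lia). rewrite E. reflexivity. Qed.

Lemma DD_remove a m i : (i < n)%nat -> a i = true ->
  SA a (fun j => SA a (fun k => m j k)) =
  m i i + SA (rm a i) (fun k => m i k) + SA (rm a i) (fun j => m j i)
  + SA (rm a i) (fun j => SA (rm a i) (fun k => m j k)).
Proof.
  intros H Hi. rewrite (SA_remove a _ i H Hi). rewrite (SA_remove a _ i H Hi).
  rewrite (SA_ext (rm a i) (fun j => SA a (fun k => m j k)) (fun j => m j i + SA (rm a i) (fun k => m j k))).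
  2:{ intros. apply SA_remove; auto. }
  rewrite SA_plus. lra.
Qed.

Lemma rm_true a i k : rm a i k = true -> k <> i /\ a k = true.
Proof. unfold rm. destruct (Nat.eqb_spec k i); intros; [discriminate| auto]. Qed.

Definition mq (r : nat -> R) j k := Rmin (p j - r j) (p k - r k).

Lemma off_lb : forall S t a r,
  (forall o d, In (o, d) S -> 0 <= d) ->
  (forall k, (k < n)%nat -> a k = true -> r k < p k /\ p k - r k <= off_proc S k) ->
  SA a (fun _ => t) + / 2 * SA a (fun j => SA a (fun k => mq r j k))
  <= SA a (fun k => off_comp_aux p S t (r k) k).
Proof.
  induction S as [|[o d] S IH]; intros t a r Hd Ha.
  - assert (forall k, (k < n)%nat -> a k = false).
    { intros k Hk. destruct (a k) eqn:E; auto. destruct (Ha k Hk E). simpl in *. lra. }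
    rewrite !SA_none; auto. lra.
  - assert (Hd0 : 0 <= d) by (apply (Hd o); left; auto).
    assert (Hd' : forall o d, In (o, d) S -> 0 <= d) by (intros; eapply Hd; right; eauto).
    assert (Hskip : (forall k, (k < n)%nat -> a k = true ->
              off_comp_aux p ((o, d) :: S) t (r k) k = off_comp_aux p S (t + d) (r k) k
              /\ off_proc ((o,d)::S) k = off_proc S k) ->
            SA a (fun _ => t) + / 2 * SA a (fun j => SA a (fun k => mq r j k))
            <= SA a (fun k => off_comp_aux p ((o, d) :: S) t (r k) k)).
    { intros Hs. rewrite (SA_ext a (fun k => off_comp_aux p ((o, d) :: S) t (r k) k) (fun k => off_comp_aux p S (t + d) (r k) k)).
      2:{ intros; apply Hs; auto. }
      eapply Rle_trans; [|apply IH; auto].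
      2:{ intros k Hk Hak. destruct (Ha k Hk Hak). destruct (Hs k Hk Hak). split; auto. rewrite <- H2; auto. }
      assert (SA a (fun _ => t) <= SA a (fun _ => t + d)) by (apply SA_le; intros; lra). lra. }
    destruct o as [i|].
    2:{ apply Hskip. intros; simpl; auto. }
    destruct (lt_dec i n) as [Hin|Hin]; [destruct (a i) eqn:Hai|].
    + destruct (Ha i Hin Hai) as [Hr Hpr].
      destruct (Rle_dec (p i) (r i + d)) as [Hc|Hc].
      *
        rewrite (SA_remove a (fun k => off_comp_aux p ((Some i, d) :: S) t (r k) k) i Hin Hai). rewrite (SA_remove a (fun _ => t) i Hin Hai).
        rewrite (DD_remove a _ i Hin Hai).
        assert (Ei : off_comp_aux p ((Some i, d) :: S) t (r i) i = t + (p i - r i)).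
        { simpl. rewrite Nat.eqb_refl. destruct (Rle_dec (p i) (r i + d)); [auto|contradiction]. }
        rewrite Ei.
        rewrite (SA_ext (rm a i) (fun k => off_comp_aux p ((Some i, d) :: S) t (r k) k)
                   (fun k => off_comp_aux p S (t + d) (r k) k)).
        2:{ intros k Hk Hk'. apply rm_true in Hk' as [Hki _]. simpl.
            destruct (Nat.eqb_spec i k); [lia|auto]. }
        assert (IH1 := IH (t + d) (rm a i) r Hd').
        assert (IH2 : SA (rm a i) (fun _ => t + d) + / 2 * SA (rm a i) (fun j => SA (rm a i) (fun k => mq r j k))
                <= SA (rm a i) (fun k => off_comp_aux p S (t + d) (r k) k)).
        { apply IH1. intros k Hk Hk'. apply rm_true in Hk' as [Hki Hak].
          destruct (Ha k Hk Hak). split; auto. simpl in H0. destruct (Nat.eqb_spec i k); [lia|auto]. }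
        assert (E1 : SA (rm a i) (fun _ => t + d) = SA (rm a i) (fun _ => t) + SA (rm a i) (fun _ => d)).
        { rewrite <- SA_plus. reflexivity. }
        assert (E2 : SA (rm a i) (fun k => mq r i k) <= SA (rm a i) (fun _ => d)).
        { apply SA_le; intros. unfold mq. pose proof (Rmin_l (p i - r i) (p k - r k)). lra. }
        assert (E3 : SA (rm a i) (fun k => mq r k i) <= SA (rm a i) (fun _ => d)).
        { apply SA_le; intros. unfold mq. pose proof (Rmin_r (p k - r k) (p i - r i)). lra. }
        assert (E4 : mq r i i = p i - r i) by (unfold mq; apply Rmin_left; lra).
        lra.
      *
        set (r' := updR r i (r i + d)).
        rewrite (SA_ext a (fun k => off_comp_aux p ((Some i, d) :: S) t (r k) k)
                   (fun k => off_comp_aux p S (t + d) (r' k) k)).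
        2:{ intros k Hk Hak. simpl. unfold r', updR. destruct (Nat.eqb_spec i k).
            - subst. rewrite Nat.eqb_refl. destruct (Rle_dec (p k) (r k + d)); [contradiction|auto].
            - destruct (Nat.eqb_spec k i); [lia|auto]. }
        eapply Rle_trans; [|apply IH; auto].
        2:{ intros k Hk Hak. unfold r', updR. destruct (Ha k Hk Hak) as [Hk1 Hk2]. simpl in Hk2.
            destruct (Nat.eqb_spec k i).
            - subst. destruct (Nat.eqb_spec i i); [|lia]. split; lra.
            - destruct (Nat.eqb_spec i k); [lia|]. auto. }
        rewrite (DD_remove a (mq r) i Hin Hai). rewrite (DD_remove a (mq r') i Hin Hai).
        assert (Er : forall k, k <> i -> r' k = r k).
        { intros k Hk; unfold r', updR. destruct (Nat.eqb_spec k i); [lia|auto]. }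
        assert (Eri : r' i = r i + d) by (unfold r', updR; rewrite Nat.eqb_refl; auto).
        assert (ED : SA (rm a i) (fun j => SA (rm a i) (fun k => mq r j k)) =
                     SA (rm a i) (fun j => SA (rm a i) (fun k => mq r' j k))).
        { apply SA_ext; intros j Hj Hj'. apply SA_ext; intros k Hk Hk'.
          apply rm_true in Hj' as [Hj1 _]. apply rm_true in Hk' as [Hk1 _].
          unfold mq. rewrite !Er; auto. }
        assert (E2 : SA (rm a i) (fun k => mq r i k) <= SA (rm a i) (fun k => mq r' i k) + SA (rm a i) (fun _ => d)).
        { rewrite <- SA_plus. apply SA_le; intros k Hk Hk'. apply rm_true in Hk' as [Hk1 _].
          unfold mq. rewrite Eri, Er; auto. unfold Rmin.
          destruct (Rle_dec (p i - r i) (p k - r k)); destruct (Rle_dec (p i - (r i + d)) (p k - r k)); lra. }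
        assert (E3 : SA (rm a i) (fun k => mq r k i) <= SA (rm a i) (fun k => mq r' k i) + SA (rm a i) (fun _ => d)).
        { rewrite <- SA_plus. apply SA_le; intros k Hk Hk'. apply rm_true in Hk' as [Hk1 _].
          unfold mq. rewrite Eri, Er; auto. unfold Rmin.
          destruct (Rle_dec (p k - r k) (p i - r i)); destruct (Rle_dec (p k - r k) (p i - (r i + d))); lra. }
        assert (E4 : mq r i i = p i - r i) by (unfold mq; apply Rmin_left; lra).
        assert (E5 : mq r' i i = p i - (r i + d)) by (unfold mq; rewrite Eri; apply Rmin_left; lra).
        assert (E6 : SA a (fun _ => t + d) = SA a (fun _ => t) + SA a (fun _ => d)) by (rewrite <- SA_plus; reflexivity).
        assert (E7 : SA a (fun _ => d) = d + SA (rm a i) (fun _ => d)) by (rewrite (SA_remove a (fun _ => d) i Hin Hai); reflexivity).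
        lra.
    + apply Hskip. intros k Hk Hak. simpl. destruct (Nat.eqb_spec i k); [subst; congruence|auto].
    + apply Hskip. intros k Hk Hak. simpl. destruct (Nat.eqb_spec i k); [lia|auto].
Qed.

Lemma opt_lb : forall S, valid_offline n p S -> (forall j, (j < n)%nat -> 1 <= p j) ->
  / 2 * sumR n (fun j => sumR n (fun k => Rmin (p j) (p k))) <= sumR n (fun j => off_comp p S j).
Proof.
  intros S [Hd Hp] H1.
  assert (L := off_lb S 0 (fun _ => true) (fun _ => 0) Hd).
  unfold SA in L. simpl in L. unfold mq in L.
  rewrite sumR_zero in L.
  rewrite (sumR_ext n (fun j => sumR n (fun k => Rmin (p j - 0) (p k - 0)))
             (fun j => sumR n (fun k => Rmin (p j) (p k)))) in L.
  2:{ intros j Hj. apply sumR_ext; intros. rewrite !Rminus_0_r; auto. }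
  unfold off_comp. 
  assert (L2 : 0 + / 2 * sumR n (fun j => sumR n (fun k => Rmin (p j) (p k))) <=
       sumR n (fun k => off_comp_aux p S 0 0 k)).
  { apply L. intros k Hk _. specialize (H1 k Hk). specialize (Hp k Hk). split; lra. }
  lra.
Qed.
End Offline.

Definition act (q : list (Z * nat)) (k : nat) : bool := existsb (fun e => Nat.eqb (snd e) k) q.

Lemma act_spec q k : act q k = true <-> In k (map snd q).
Proof.
  unfold act. rewrite existsb_exists. rewrite in_map_iff. split.
  - intros [x [Hx E]]. apply Nat.eqb_eq in E. eauto.
  - intros [x [E Hx]]. exists x. split; auto. apply Nat.eqb_eq; auto.
Qed.

Section Pot.
Variables (delta : R) (p : nat -> R) (n : nat).

Definition beta (a : nat -> bool) (rc : nat -> R) (j k : nat) : R :=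
  if a j then (if a k then rc j + rc k else p k + Rmin (rc j) ((1 + delta) * p k))
  else (if a k then p j + Rmin (rc k) ((1 + delta) * p j) else (2 + 2 * delta) * Rmin (p j) (p k)).

Ltac rmin_cases := repeat match goal with |- context [Rmin ?x ?y] =>
   let H := fresh in unfold Rmin at 1; destruct (Rle_dec x y) as [H|H] end.

Lemma beta_complete a a' rc i j k :
  (i < n)%nat -> (j < n)%nat -> (k < n)%nat ->
  0 < delta -> 0 <= p i -> 0 <= p j -> 0 <= p k -> a i = true ->
  (forall k, a' k = if Nat.eqb k i then false else a k) ->
  (forall k, (k < n)%nat -> a k = true -> rc k <= (1 + delta) * p i) ->
  (forall k, (k < n)%nat -> a k = false -> p k <= (1 + delta) * p i) ->
  beta a rc j k + (if Nat.eqb j i then (if a k then p i - rc i else 0) else 0)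
    + (if Nat.eqb k i then (if a j then p i - rc i else 0) else 0)
  <= beta a' (updR rc i (p i)) j k.
Proof.
  intros Hin Hjn Hkn Hd Hpi Hpj Hpk Hai Ha' Hact Hdone. assert (0 <= delta * p i) by (apply Rmult_le_pos; lra). unfold beta, updR. rewrite !Ha'.
  destruct (Nat.eqb_spec j i); destruct (Nat.eqb_spec k i); subst.
  - rewrite Hai; cbv iota beta. rewrite (Rmin_left (p i) (p i)) by lra. lra.
  - rewrite Hai; cbv iota beta. destruct (a k) eqn:Ek.
    + specialize (Hact k Hkn Ek). rmin_cases; nra.
    + specialize (Hdone k Hkn Ek). specialize (Hact i Hin Hai). rmin_cases; nra.
  - rewrite Hai; cbv iota beta. destruct (a j) eqn:Ej.
    + specialize (Hact j Hjn Ej). rmin_cases; nra.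
    + specialize (Hdone j Hjn Ej). specialize (Hact i Hin Hai). rmin_cases; nra.
  - lra.
Qed.

Lemma beta_promote a rc i j k thr :
  a i = true -> rc i <= thr ->
  beta a rc j k + (if Nat.eqb j i then (if a k then thr - rc i else 0) else 0)
    + (if Nat.eqb k i then (if a j then thr - rc i else 0) else 0)
  <= beta a (updR rc i thr) j k.
Proof.
  intros Hai Hr. unfold beta, updR.
  destruct (Nat.eqb_spec j i); destruct (Nat.eqb_spec k i); subst.
  - rewrite Hai; cbv iota beta. lra.
  - rewrite Hai; cbv iota beta. destruct (a k) eqn:Ek; [lra|]. rmin_cases; lra.
  - rewrite Hai; cbv iota beta. destruct (a j) eqn:Ej; [lra|]. rmin_cases; lra.
  - lra.
Qed.

Lemma pot_step (a a' : nat -> bool) (t t' d : R) (cp cp' : nat -> R) (bt bt' : nat -> nat -> R) i :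
  (i < n)%nat ->
  (forall k, (k < n)%nat -> (if a' k then t' else cp' k) = (if a k then t else cp k) + (if a k then d else 0)) ->
  (forall j k, (j < n)%nat -> (k < n)%nat ->
     bt j k + (if Nat.eqb j i then (if a k then d else 0) else 0)
       + (if Nat.eqb k i then (if a j then d else 0) else 0) <= bt' j k) ->
  2 * sumR n (fun k => if a k then t else cp k) <= sumR n (fun j => sumR n (fun k => bt j k)) ->
  2 * sumR n (fun k => if a' k then t' else cp' k) <= sumR n (fun j => sumR n (fun k => bt' j k)).
Proof.
  intros Hi HG HB H.
  rewrite (sumR_ext n _ _ HG), sumR_plus.
  set (SAd := sumR n (fun k => if a k then d else 0)).
  assert (L : sumR n (fun j => sumR n (fun k => bt j k + (if Nat.eqb j i then (if a k then d else 0) else 0)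
       + (if Nat.eqb k i then (if a j then d else 0) else 0))) <= sumR n (fun j => sumR n (fun k => bt' j k))).
  { apply sumR_le; intros j Hj. apply sumR_le; intros k Hk. apply HB; auto. }
  rewrite (sumR_ext n (fun j => sumR n (fun k => bt j k + (if Nat.eqb j i then (if a k then d else 0) else 0)
       + (if Nat.eqb k i then (if a j then d else 0) else 0)))
     (fun j => sumR n (fun k => bt j k) + (if Nat.eqb j i then SAd else 0) + (if a j then d else 0))) in L.
  2:{ intros j Hj. rewrite !sumR_plus. rewrite sumR_if. rewrite sumR_delta by auto. reflexivity. }
  rewrite !sumR_plus in L. rewrite sumR_delta in L by auto. fold SAd in L. lra.
Qed.

End Pot.

Lemma floor_le x : IZR (floorZ x) <= x.
Proof. unfold floorZ. rewrite minus_IZR. destruct (archimed x). lra. Qed.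
Lemma floor_gt x : x - 1 < IZR (floorZ x).
Proof. unfold floorZ. rewrite minus_IZR. destruct (archimed x). lra. Qed.
Lemma le_floor z x : IZR z <= x -> (z <= floorZ x)%Z.
Proof. intros H. unfold floorZ. destruct (archimed x). assert (IZR z < IZR (up x)) by lra.
  apply lt_IZR in H2. lia. Qed.

Lemma ln_le' x y : 0 < x -> x <= y -> ln x <= ln y.
Proof. intros Hx Hxy. destruct (Rle_lt_or_eq_dec _ _ Hxy). left; apply ln_increasing; auto. subst; lra. Qed.
Lemma exp_le' x y : x <= y -> exp x <= exp y.
Proof. intros H. destruct (Rle_lt_or_eq_dec _ _ H). left; apply exp_increasing; auto. subst; lra. Qed.

Definition SR := StronglySorted (fun e e' : Z * nat => (fst e <= fst e')%Z).

Lemma perm_ins e q : Permutation (ins e q) (e :: q).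
Proof.
  induction q as [|e' q IH]; simpl; auto.
  destruct (Z.leb (fst e') (fst e)); auto.
  eapply perm_trans; [apply perm_skip, IH|]. apply perm_swap.
Qed.

Lemma sorted_ins e q : SR q -> SR (ins e q).
Proof.
  unfold SR. induction q as [|e' q IH]; simpl; intros H.
  - constructor; auto.
  - inversion H as [|? ? Hq Hf]; subst. destruct (Z.leb_spec (fst e') (fst e)).
    + constructor; auto. rewrite Forall_forall in *. intros x Hx.
      apply (Permutation_in _ (perm_ins e q)) in Hx. destruct Hx as [<-|Hx]; auto.
    + constructor; auto. constructor. lia. rewrite Forall_forall in *. intros x Hx.
      specialize (Hf x Hx). lia.
Qed.

Lemma act_perm q q' k : Permutation q q' -> act q k = act q' k.
Proof.
  intros P. destruct (act q k) eqn:E1; destruct (act q' k) eqn:E2; auto.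
  - apply act_spec in E1. apply (Permutation_in _ (Permutation_map snd P)) in E1.
    apply act_spec in E1. congruence.
  - apply act_spec in E2. apply (Permutation_in _ (Permutation_map snd (Permutation_sym P))) in E2.
    apply act_spec in E2. congruence.
Qed.

Lemma iter_shift {A} (f : A -> A) N x : Nat.iter N f (f x) = Nat.iter (S N) f x.
Proof. induction N; simpl; auto. rewrite IHN. reflexivity. Qed.

Section Alg.
Variables (delta : R) (p phat : nat -> R) (n : nat).
Hypothesis Hd : 0 < delta.
Hypothesis Hp1 : forall j, (j < n)%nat -> 1 <= p j.
Hypothesis Hph : forall j, (j < n)%nat -> 0 < phat j.
Hypothesis Hle : forall j, (j < n)%nat -> phat j <= p j.

Definition Ulev k := floorZ (ln (p k) / ln (1 + delta)).
Definition Gs (s : pstate) := sumR n (fun k => if act (ps_queue s) k then ps_time s else ps_comp s k).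
Definition Bs (s : pstate) := sumR n (fun j => sumR n (fun k => beta delta p (act (ps_queue s)) (ps_recv s) j k)).

Record Inv (s : pstate) : Prop := mkInv {
 i_lt : forall e, In e (ps_queue s) -> (snd e < n)%nat;
 i_nd : NoDup (map snd (ps_queue s));
 i_sort : SR (ps_queue s);
 i_recv : forall e e', In e (ps_queue s) -> In e' (ps_queue s) -> ps_recv s (snd e) <= threshold delta (fst e');
 i_pow : forall e, In e (ps_queue s) -> powerRZ (1+delta) (fst e) <= p (snd e);
 i_done : forall j k, (j < n)%nat -> act (ps_queue s) j = false -> act (ps_queue s) k = true -> p j <= (1+delta) * p k;
 i_npq : forall e, In e (ps_queue s) -> INR (ps_npre s (snd e)) <= IZR (fst e - init_level delta phat (snd e));
 i_np : forall k, (k < n)%nat -> INR (ps_npre s k) <= IZR (Ulev k - init_level delta phat k);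
 i_pot : 2 * Gs s <= Bs s }.

Lemma lnb_pos : 0 < ln (1 + delta).
Proof. rewrite <- ln_1. apply ln_increasing; lra. Qed.

Lemma pow_mono z1 z2 : (z1 <= z2)%Z -> powerRZ (1+delta) z1 <= powerRZ (1+delta) z2.
Proof. intros H. rewrite !powerRZ_Rpower by lra. apply Rle_Rpower; [lra|apply IZR_le; auto]. Qed.

Lemma thr_eq h : threshold delta h = powerRZ (1+delta) h * (1+delta).
Proof. unfold threshold. rewrite powerRZ_add by lra. simpl. ring. Qed.

Lemma pow_U k l : 0 < p k -> powerRZ (1+delta) l <= p k -> (l <= Ulev k)%Z.
Proof.
  intros Hp H. unfold Ulev. apply le_floor.
  rewrite powerRZ_Rpower in H by lra. unfold Rpower in H.
  apply ln_le' in H; [|apply exp_pos]. rewrite ln_exp in H.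
  assert (L := lnb_pos).
  apply (Rmult_le_reg_r (ln (1 + delta))); auto. unfold Rdiv. rewrite Rmult_assoc, Rinv_l by lra. lra.
Qed.

Lemma pow_init k : 0 < phat k -> powerRZ (1+delta) (init_level delta phat k) <= phat k.
Proof.
  intros Hp. rewrite powerRZ_Rpower by lra. unfold Rpower, init_level.
  rewrite <- (exp_ln (phat k)) at 2 by auto. apply exp_le'.
  assert (L := lnb_pos). pose proof (floor_le (ln (phat k) / ln (1 + delta))).
  apply (Rmult_le_compat_r (ln (1 + delta))) in H; [|lra].
  unfold Rdiv in H. rewrite Rmult_assoc, Rinv_l in H by lra. lra.
Qed.

Lemma np_facts (c : bool) (np : nat -> nat) i :
  (forall k, k <> i -> (if c then np else updN np i (S (np i))) k = np k) /\
  ((if c then np else updN np i (S (np i))) i <= S (np i))%nat.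
Proof.
  destruct c; split; auto. intros k Hk. unfold updN. destruct (Nat.eqb_spec k i); [lia|auto].
  unfold updN. rewrite Nat.eqb_refl. lia.
Qed.

Lemma step_inv s : Inv s -> Inv (pmlf_step delta p s).
Proof.
  intros I. destruct s as [t Q rc cp np].
  destruct Q as [|[h i] q]. { exact I. }
  destruct I as [Ilt Ind Isort Irecv Ipow Idone Inpq Inp Ipot]; cbn [ps_queue ps_recv ps_time ps_comp ps_npre] in *.
  assert (Hin : In (h,i) ((h,i)::q)) by (left; auto).
  assert (Hi : (i < n)%nat) by apply (Ilt _ Hin).
  inversion Ind as [|? ? Hni Hndq]; subst.
  inversion Isort as [|? ? Hsq Hfa]; subst.
  assert (Hlev : forall e, In e q -> (h <= fst e)%Z).
  { intros e He. rewrite Forall_forall in Hfa. apply (Hfa e He). }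
  assert (Hri : rc i <= threshold delta h) by apply (Irecv (h,i) (h,i) Hin Hin).
  assert (Hpowi := Ipow (h,i) Hin). simpl in Hpowi.
  assert (Hpi : 1 <= p i) by apply (Hp1 i Hi).
  assert (HaI : act ((h,i)::q) i = true) by (apply act_spec; left; auto).
  assert (Hact_cons : forall k, act ((h,i)::q) k = Nat.eqb i k || act q k) by reflexivity.
  assert (Hactq_i : act q i = false).
  { destruct (act q i) eqn:E; auto. apply act_spec in E. contradiction. }
  assert (Hpowpos : 0 < powerRZ (1+delta) h) by (apply powerRZ_lt; lra).
  assert (Hthr : threshold delta h <= (1+delta) * p i) by (rewrite thr_eq; nra).
  assert (Hrk : forall k, act ((h,i)::q) k = true -> rc k <= threshold delta h).
  { intros k Hk. apply act_spec in Hk. apply in_map_iff in Hk as [e [Ee He]]. subst k. apply (Irecv e (h,i)); auto. }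
  assert (Hnotin : forall e, In e q -> snd e <> i).
  { intros e He E. apply Hni. rewrite <- E. apply in_map; auto. }
  unfold pmlf_step. cbn [ps_queue ps_recv ps_time ps_comp ps_npre]. destruct (Rle_dec (p i) (threshold delta h)) as [Hc|Hc].
  - constructor; cbn [ps_queue ps_recv ps_time ps_comp ps_npre].
    + intros; apply Ilt; right; auto.
    + auto.
    + exact Hsq.
    + intros e e' He He'. unfold updR. destruct (Nat.eqb_spec (snd e) i).
      { exfalso; exact (Hnotin e He e0). }
      apply Irecv; right; auto.
    + intros; apply Ipow; right; auto.
    + intros j k Hj Hjq Hkq. destruct (Nat.eqb_spec j i).
      * subst j. apply act_spec in Hkq; apply in_map_iff in Hkq as [e [Ee He]]. subst k.
        assert (powerRZ (1+delta) h <= powerRZ (1+delta) (fst e)) by (apply pow_mono; auto).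
        specialize (Ipow e (or_intror He)). rewrite thr_eq in Hc. nra.
      * apply Idone; auto.
        -- rewrite Hact_cons, Hjq. destruct (Nat.eqb_spec i j); [lia|auto].
        -- rewrite Hact_cons, Hkq. apply Bool.orb_true_r.
    + intros; apply Inpq; right; auto.
    + auto.
    + unfold Gs, Bs in *; cbn [ps_queue ps_recv ps_time ps_comp ps_npre] in *.
      apply (pot_step n (act ((h,i)::q)) (act q) t (t + (p i - rc i)) (p i - rc i) cp
               (updR cp i (t + (p i - rc i))) (beta delta p (act ((h,i)::q)) rc)
               (beta delta p (act q) (updR rc i (p i))) i Hi); [ | | exact Ipot].
      * intros k Hk. rewrite Hact_cons. unfold updR. destruct (Nat.eqb_spec k i).
        -- subst. rewrite Nat.eqb_refl, Hactq_i. simpl. lra.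
        -- destruct (Nat.eqb_spec i k); [lia|]. simpl. destruct (act q k); lra.
      * intros j k Hj Hk. apply (beta_complete delta p n); auto; try lra.
        -- pose proof (Hp1 j Hj); lra.
        -- pose proof (Hp1 k Hk); lra.
        -- intros k'. rewrite Hact_cons. destruct (Nat.eqb_spec k' i).
           ++ rewrite e; exact Hactq_i.
           ++ destruct (Nat.eqb_spec i k'); [lia|auto].
        -- intros k' _ Hk'. specialize (Hrk k' Hk'). lra.
  - set (thr := threshold delta h) in *.
    match goal with |- context [if ?c then np else ?u] =>
      destruct (np_facts c np i) as [Hno Hni']; set (np' := if c then np else u) in * end.
    assert (Hperm := perm_ins (h + 1, i)%Z q).
    assert (Hin' : forall e, In e (ins (h + 1, i)%Z q) <-> e = (h + 1, i)%Z \/ In e q).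
    { intros e. split; intros He.
      - apply (Permutation_in _ Hperm) in He. destruct He; auto.
      - apply (Permutation_in _ (Permutation_sym Hperm)). destruct He; [left|right]; auto. }
    assert (Hact' : forall k, act (ins (h + 1, i)%Z q) k = act ((h,i)::q) k).
    { intros k. rewrite (act_perm _ _ k Hperm). reflexivity. }
    assert (HhU : (h + 1 <= Ulev i)%Z).
    { apply pow_U; [lra|]. unfold thr, threshold in Hc. lra. }
    constructor; cbn [ps_queue ps_recv ps_time ps_comp ps_npre].
    + intros e He. apply Hin' in He as [->|He]; simpl; auto. apply Ilt; right; auto.
    + apply (Permutation_NoDup (Permutation_sym (Permutation_map snd Hperm))). simpl. auto.
    + apply sorted_ins; auto.
    + intros e e' He He'. unfold updR.
      assert (Hle' : (h <= fst e')%Z).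
      { apply Hin' in He' as [->|He']; simpl; [lia|apply Hlev; auto]. }
      assert (thr <= threshold delta (fst e')) by (unfold thr, threshold; apply pow_mono; lia).
      destruct (Nat.eqb_spec (snd e) i). lra.
      apply Hin' in He as [->|He]; [simpl in *; contradiction|].
      apply Hin' in He' as [->|He'].
      * simpl. eapply Rle_trans; [apply (Irecv e (h,i)); [right; auto| left; auto]|]. simpl.
        unfold threshold; apply pow_mono; lia.
      * apply Irecv; right; auto.
    + intros e He. apply Hin' in He as [->|He].
      * simpl. unfold thr, threshold in Hc. lra.
      * apply Ipow; right; auto.
    + intros j k Hj Hjq Hkq. rewrite Hact' in Hjq, Hkq. apply Idone; auto.
    + intros e He. apply Hin' in He as [->|He]; simpl.
      * apply le_INR in Hni'. rewrite S_INR in Hni'. specialize (Inpq (h,i) Hin). simpl in Inpq.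
        rewrite minus_IZR in Inpq. rewrite minus_IZR, plus_IZR. lra.
      * rewrite Hno by (apply Hnotin; auto). apply Inpq; right; auto.
    + intros k Hk. destruct (Nat.eq_dec k i).
      * subst k. apply le_INR in Hni'. rewrite S_INR in Hni'. specialize (Inpq (h,i) Hin). simpl in Inpq.
        apply IZR_le in HhU. rewrite plus_IZR in HhU.
        rewrite !minus_IZR in *. lra.
      * rewrite Hno by auto. apply Inp; auto.
    + unfold Gs, Bs in *; cbn [ps_queue ps_recv ps_time ps_comp ps_npre] in *.
      apply (pot_step n (act ((h,i)::q)) (act (ins (h + 1, i)%Z q)) t (t + (thr - rc i)) (thr - rc i) cp cp
               (beta delta p (act ((h,i)::q)) rc)
               (beta delta p (act (ins (h + 1, i)%Z q)) (updR rc i thr)) i Hi); [ | | exact Ipot].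
      * intros k Hk. rewrite Hact'. destruct (act ((h,i)::q) k); lra.
      * intros j k Hj Hk. 
        assert (E : beta delta p (act (ins (h + 1, i)%Z q)) (updR rc i thr) j k =
                    beta delta p (act ((h,i)::q)) (updR rc i thr) j k).
        { unfold beta. rewrite !Hact'. reflexivity. }
        rewrite E. apply (beta_promote delta p); auto.
Qed.


Definition mk j := (init_level delta phat j, j).

Lemma fold_perm l q : Permutation (fold_left (fun q j => ins (init_level delta phat j, j) q) l q) (map mk l ++ q).
Proof.
  revert q; induction l as [|a l IH]; intros q; simpl; auto.
  eapply perm_trans; [apply IH|].
  eapply perm_trans; [apply Permutation_app_head, perm_ins|].
  apply Permutation_sym, Permutation_middle.
Qed.

Lemma fold_sorted l q : SR q -> SR (fold_left (fun q j => ins (init_level delta phat j, j) q) l q).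
Proof. revert q; induction l as [|a l IH]; intros q H; simpl; auto. apply IH, sorted_ins; auto. Qed.

Lemma init_inv : Inv (pmlf_init delta phat n).
Proof.
  unfold pmlf_init.
  set (q0 := fold_left (fun q j => ins (init_level delta phat j, j) q) (seq 0 n) nil).
  assert (HP : Permutation q0 (map mk (seq 0 n))).
  { rewrite <- (app_nil_r (map mk (seq 0 n))). apply fold_perm. }
  assert (Hms : map snd (map mk (seq 0 n)) = seq 0 n).
  { rewrite map_map. unfold mk. simpl. apply map_id. }
  assert (Hin0 : forall e, In e q0 -> exists j, (j < n)%nat /\ e = mk j).
  { intros e He. apply (Permutation_in _ HP) in He. apply in_map_iff in He as [j [E Hj]].
    apply in_seq in Hj. exists j; split; auto; lia. }
  assert (Hact0 : forall k, (k < n)%nat -> act q0 k = true).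
  { intros k Hk. apply act_spec. apply (Permutation_in _ (Permutation_map snd (Permutation_sym HP))).
    rewrite Hms. apply in_seq. lia. }
  constructor; cbn [ps_queue ps_recv ps_time ps_comp ps_npre].
  - intros e He. destruct (Hin0 e He) as [j [Hj ->]]. simpl; auto.
  - apply (Permutation_NoDup (Permutation_map snd (Permutation_sym HP))). rewrite Hms. apply seq_NoDup.
  - apply fold_sorted. constructor.
  - intros e e' _ _. left. unfold threshold. apply powerRZ_lt. lra.
  - intros e He. destruct (Hin0 e He) as [j [Hj ->]]. simpl.
    pose proof (pow_init j (Hph j Hj)). pose proof (Hle j Hj). lra.
  - intros j k Hj Hjq _. rewrite Hact0 in Hjq; auto; discriminate.
  - intros e He. destruct (Hin0 e He) as [j [Hj ->]]. simpl. rewrite Z.sub_diag. simpl. lra.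
  - intros k Hk. simpl. apply IZR_le.
    assert (init_level delta phat k <= Ulev k)%Z.
    { apply pow_U. pose proof (Hp1 k Hk); lra. pose proof (pow_init k (Hph k Hk)). pose proof (Hle k Hk). lra. }
    lia.
  - unfold Gs, Bs. cbn [ps_queue ps_recv ps_time ps_comp ps_npre].
    match goal with |- 2 * sumR n ?f <= sumR n ?g =>
      assert (A1 : sumR n f <= 0); [|assert (A2 : 0 <= sumR n g); [|lra]] end.
    + apply Rle_trans with (sumR n (fun _ => 0)); [|rewrite sumR_zero; lra].
      apply sumR_le. intros k _. destruct (act q0 k); lra.
    + apply sumR_nonneg. intros j Hj. apply sumR_nonneg. intros k Hk.
      unfold beta. rewrite !Hact0 by auto. lra.
Qed.

Definition mu1 (e : Z * nat) := S (Z.to_nat (Ulev (snd e) - fst e)).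
Definition mu (q : list (Z * nat)) := fold_right (fun e acc => (mu1 e + acc)%nat) 0%nat q.

Lemma mu_ins e q : mu (ins e q) = (mu1 e + mu q)%nat.
Proof.
  assert (C : forall x l, mu (x :: l) = (mu1 x + mu l)%nat) by reflexivity.
  induction q as [|e' q IH]; [reflexivity|]. cbn [ins].
  destruct (Z.leb (fst e') (fst e)); rewrite !C; [rewrite IH|]; lia.
Qed.

Lemma mu_step s : Inv s -> ps_queue s <> nil -> (mu (ps_queue (pmlf_step delta p s)) < mu (ps_queue s))%nat.
Proof.
  intros I Hne. destruct s as [t Q rc cp np]. destruct Q as [|[h i] q]; [contradiction|].
  assert (Hi : (i < n)%nat) by (apply (i_lt _ I (h,i)); left; auto).
  unfold pmlf_step. cbn [ps_queue ps_recv ps_time ps_comp ps_npre].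
  destruct (Rle_dec (p i) (threshold delta h)) as [Hc|Hc].
  - simpl. lia.
  - cbn [ps_queue]. rewrite mu_ins. simpl. unfold mu1. simpl.
    assert (h + 1 <= Ulev i)%Z.
    { apply pow_U. pose proof (Hp1 i Hi); lra. unfold threshold in Hc. lra. }
    lia.
Qed.

Lemma reach : forall m s, Inv s -> (mu (ps_queue s) <= m)%nat ->
  exists N, ps_queue (Nat.iter N (pmlf_step delta p) s) = nil /\ Inv (Nat.iter N (pmlf_step delta p) s).
Proof.
  induction m; intros s I Hm; destruct (ps_queue s) eqn:Eq.
  - exists 0%nat; simpl; auto.
  - simpl in Hm. unfold mu1 in Hm. lia.
  - exists 0%nat; simpl; auto.
  - assert (Hne : ps_queue s <> nil) by (rewrite Eq; discriminate).
    assert (L := mu_step s I Hne).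
    destruct (IHm (pmlf_step delta p s) (step_inv s I)) as [N [HN1 HN2]].
    { rewrite Eq in L. lia. }
    exists (S N). rewrite <- iter_shift. auto.
Qed.

End Alg.

Lemma log_bound delta pk phk : 0 < delta -> 0 < phk -> phk <= pk ->
  IZR (floorZ (ln pk / ln (1 + delta)) - floorZ (ln phk / ln (1 + delta)))
  <= (1 + delta * ln 2 / ln (1 + delta)) * (1 + / delta * log2 (pk / phk)).
Proof.
  intros Hd Hph Hle.
  assert (L : 0 < ln (1 + delta)) by (rewrite <- ln_1; apply ln_increasing; lra).
  assert (L2 : 0 < ln 2) by (rewrite <- ln_1; apply ln_increasing; lra).
  rewrite minus_IZR.
  pose proof (floor_le (ln pk / ln (1 + delta))). pose proof (floor_gt (ln phk / ln (1 + delta))).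
  assert (Hlog : log2 (pk / phk) = (ln pk - ln phk) / ln 2).
  { unfold log2, Rdiv. rewrite ln_mult, ln_Rinv; try lra. apply Rinv_0_lt_compat; lra. }
  rewrite Hlog.
  assert (D : 0 <= ln pk - ln phk) by (pose proof (ln_le' phk pk Hph Hle); lra).
  set (Dd := ln pk - ln phk) in *.
  assert (E : ln pk / ln (1 + delta) - ln phk / ln (1 + delta) = Dd / ln (1 + delta))
    by (unfold Dd; field; lra).
  assert (E2 : (1 + delta * ln 2 / ln (1 + delta)) * (1 + / delta * (Dd / ln 2))
              = 1 + Dd / ln (1 + delta) + (delta * ln 2 / ln (1 + delta) + Dd / (delta * ln 2))).
  { field. repeat split; lra. }
  rewrite E2.
  assert (P1 : 0 < delta * ln 2 / ln (1 + delta)).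
  { unfold Rdiv. apply Rmult_lt_0_compat; [nra| apply Rinv_0_lt_compat; lra]. }
  assert (P2 : 0 <= Dd / (delta * ln 2)).
  { unfold Rdiv. apply Rmult_le_pos; [lra| left; apply Rinv_0_lt_compat; nra]. }
  lra.
Qed.

Theorem mainTheorem1 :
  forall delta : R, 0 < delta ->
  exists K : R,
  forall (n : nat) (p phat : nat -> R),
    (forall j, (j < n)%nat -> 1 <= p j) ->
    (forall j, (j < n)%nat -> 0 < phat j) ->
    (forall j, (j < n)%nat -> phat j <= p j) ->
    exists N : nat,
      let s := pmlf_run delta p phat n N in
      ps_queue s = nil /\
      (forall S : offline_schedule, valid_offline n p S ->
         sumR n (ps_comp s) <= (2 + 2 * delta) * sumR n (off_comp p S)) /\
      (forall j, (j < n)%nat ->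
         INR (ps_npre s j) <= K * (1 + / delta * log2 (p j / phat j))).
Proof.
  intros delta Hd. exists (1 + delta * ln 2 / ln (1 + delta)).
  intros n p phat H1 H2 H3.
  destruct (reach delta p phat n Hd H1 _ (pmlf_init delta phat n) (init_inv delta p phat n Hd H1 H2 H3) (le_n _))
    as [N [Hnil HI]].
  exists N. cbv zeta. unfold pmlf_run.
  set (s := Nat.iter N (pmlf_step delta p) (pmlf_init delta phat n)) in *.
  split; [exact Hnil|split].
  - intros S HS. pose proof (opt_lb n p S HS H1) as Hopt.
    pose proof (i_pot _ _ _ _ _ HI) as Hpot. unfold Gs, Bs in Hpot. rewrite Hnil in Hpot.
    unfold beta, act in Hpot. simpl in Hpot.
    rewrite (sumR_ext n (fun j => sumR n (fun k => (2 + 2 * delta) * Rmin (p j) (p k)))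
               (fun j => (2 + 2 * delta) * sumR n (fun k => Rmin (p j) (p k)))) in Hpot
      by (intros; apply sumR_scal).
    rewrite sumR_scal in Hpot.
    set (M := sumR n (fun j => sumR n (fun k => Rmin (p j) (p k)))) in *.
    set (O := sumR n (fun j => off_comp p S j)) in *.
    assert ((2 + 2 * delta) * (/ 2 * M) <= (2 + 2 * delta) * O) by (apply Rmult_le_compat_l; lra).
    change (sumR n (ps_comp s)) with (sumR n (fun k => ps_comp s k)).
    unfold O in *. change (sumR n (off_comp p S)) with (sumR n (fun j => off_comp p S j)).
    lra.
  - intros j Hj. pose proof (i_np _ _ _ _ _ HI j Hj) as Hn.
    eapply Rle_trans; [exact Hn|]. unfold Ulev, init_level.
    apply log_bound; auto.
Qed.
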